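(* Let $M\subseteq Q_q^n$ ($n\ge 2$) be an MDS code with $\overline{0}\in M$, and let $G$ be a subgroup of $\mathrm{Ist}(M)$ acting transitively on $M$ such that for all $\overline\tau=(\tau_1,\dots,\tau_n),\overline\pi=(\pi_1,\dots,\pi_n)\in G$, the equality $\overline\tau(\overline{0})=\overline\pi(\overline{0})$ implies $\tau_1=\pi_1$. Then $G$ acts regularly on $M$ (in particular $|G|=|M|$), so $M$ is topolinear with regular group $G$.
   Context: $Q_q$ is a finite set of size $q$ containing $0$; $Q_q^n$ is the Hamming space of $n$-tuples, $\overline 0$ the all-zero tuple. An MDS code (with code distance 2) of length $n$ is a set $M\subseteq Q_q^n$ with $|M|=q^{n-1}$ and any two distinct elements at Hamming distance at least 2. An isotopism is a map $\overline{x}\mapsto(\tau_1x_1,\dots,\tau_nx_n)$ with $\tau_i$ permutations of $Q_q$; $\mathrm{Ist}(M)$ is the group of isotopisms mapping $M$ onto $M$. $M$ is topolinear if $\mathrm{Ist}(M)$ contains a subgroup of cardinality $|M|$ acting transitively on $M$. *)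

(* Defs.v *)
From HB Require Import structures.
From mathcomp Require Import all_boot all_order all_fingroup.
Set Implicit Arguments. Unset Strict Implicit. Unset Printing Implicit Defensive.

Definition word (Q : finType) (n : nat) := {ffun 'I_n -> Q}.

Definition hamming (Q : finType) (n : nat) (x y : {ffun 'I_n -> Q}) : nat :=
  #|[set i | x i != y i]|.

(* MDS code with code distance 2 over alphabet Q (q = #|Q|). *)
Definition MDS2 (Q : finType) (n : nat) (M : {set {ffun 'I_n -> Q}}) : Prop :=
  #|M| = (#|Q| ^ n.-1)%N /\
  (forall x y, x \in M -> y \in M -> x != y -> 2 <= hamming x y).

Definition iso_fun (Q : finType) (n : nat) (tau : {ffun 'I_n -> {perm Q}})
  (x : {ffun 'I_n -> Q}) : {ffun 'I_n -> Q} := [ffun i => tau i (x i)].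

Definition is_iso_by (Q : finType) (n : nat) (tau : {ffun 'I_n -> {perm Q}})
  (p : {perm {ffun 'I_n -> Q}}) : Prop :=
  forall x, p x = iso_fun tau x.

(* Ist(M) (the boolean test below is the decidable form of exists tau, is_iso_by tau p) *)
Definition Ist (Q : finType) (n : nat) (M : {set {ffun 'I_n -> Q}}) :
  {set {perm {ffun 'I_n -> Q}}} :=
  [set p : {perm {ffun 'I_n -> Q}} | [exists tau : {ffun 'I_n -> {perm Q}}, [forall x, p x == iso_fun tau x]] && (p @: M == M)].

Definition topolinear (Q : finType) (n : nat) (M : {set {ffun 'I_n -> Q}}) : Prop :=
  exists H : {group {perm {ffun 'I_n -> Q}}},
    [/\ H \subset Ist M, #|H| = #|M| & [transitive H, on M | 'P]].

(* Main.v *)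
Require Import Defs.
From HB Require Import structures.
From mathcomp Require Import all_boot all_order all_fingroup.

Section Aux.
Variables (Q : finType) (n : nat) (M : {set {ffun 'I_n -> Q}}).

Lemma ham_eq (x y : {ffun 'I_n -> Q}) (i : 'I_n) :
  MDS2 M -> x \in M -> y \in M -> (forall j, j != i -> x j = y j) -> x = y.
Proof.
move=> [_ Hd] xM yM Hj; apply/eqP; apply/negPn/negP => nxy.
have := Hd _ _ xM yM nxy; rewrite /hamming.
have : [set j | x j != y j] \subset [set i].
  apply/subsetP => j; rewrite !inE; apply: contraR => /Hj ->; by rewrite eqxx.
move/subset_leq_card; rewrite cards1 => h1 h2.
by have := leq_trans h2 h1.
Qed.

Lemma cardSz (z : Q) (i1 : 'I_n) :
  #|Q| * #|[set x : {ffun 'I_n -> Q} | x i1 == z]| <= #|Q| ^ n.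
Proof.
set S := [set x : {ffun 'I_n -> Q} | x i1 == z].
pose g (p : Q * {ffun 'I_n -> Q}) : {ffun 'I_n -> Q} :=
  [ffun j => if j == i1 then p.1 else p.2 j].
have inj : {in setX [set: Q] S &, injective g}.
  move=> [c y] [c' y']; rewrite !inE /= => /eqP Hy /eqP Hy' E.
  have Ec : c = c' by have := congr1 (fun f : {ffun 'I_n -> Q} => f i1) E; rewrite /g !ffunE eqxx.
  congr pair => //; apply/ffunP => j.
  have := congr1 (fun f : {ffun 'I_n -> Q} => f j) E; rewrite /g !ffunE.
  by case: eqP => [->|]; [rewrite Hy Hy'|].
rewrite -(cardsT Q) -cardsX -(card_in_imset inj).
by rewrite cardsT -[X in _ <= _ ^ X]card_ord -card_ffun max_card.
Qed.

Lemma surjM (z : Q) (i1 : 'I_n) (w : {ffun 'I_n -> Q}) :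
  (0 < n)%N -> MDS2 M -> w i1 = z ->
  exists2 y, y \in M & forall j, j != i1 -> y j = w j.
Proof.
move=> n0 HM wz.
pose p1 (y : {ffun 'I_n -> Q}) : {ffun 'I_n -> Q} :=
  [ffun j => if j == i1 then z else y j].
set S := [set x : {ffun 'I_n -> Q} | x i1 == z].
have inj : {in M &, injective p1}.
  move=> x y xM yM E; apply: (@ham_eq _ _ i1 HM xM yM) => j ji.
  by have := congr1 (fun f : {ffun 'I_n -> Q} => f j) E; rewrite /p1 !ffunE (negbTE ji).
have sub : p1 @: M \subset S.
  by apply/subsetP => _ /imsetP[y _ ->]; rewrite inE /p1 ffunE eqxx.
have qpos : (0 < #|Q|)%N by apply/card_gt0P; exists z.
have : p1 @: M == S.
  rewrite eqEcard sub /= (card_in_imset inj) (proj1 HM).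
  have en : (#|Q| ^ n = #|Q| * #|Q| ^ n.-1)%N by rewrite -expnS prednK.
  by have := cardSz z i1; rewrite en leq_pmul2l.
have wS : w \in S by rewrite inE wz.
move/eqP => E; rewrite -E in wS; case/imsetP: wS => y yM ->.
by exists y => // j ji; rewrite /p1 ffunE (negbTE ji).
Qed.

End Aux.

Theorem proposition7 (Q : finType) (z : Q) (n : nat)
  (M : {set {ffun 'I_n -> Q}}) (G : {group {perm {ffun 'I_n -> Q}}}) :
  (2 <= n)%N ->
  MDS2 M ->
  [ffun _ => z] \in M ->
  G \subset Ist M ->
  [transitive G, on M | 'P] ->
  (forall (g h : {perm {ffun 'I_n -> Q}}) (tau pi : {ffun 'I_n -> {perm Q}})
          (i1 : 'I_n),
      g \in G -> h \in G -> is_iso_by tau g -> is_iso_by pi h ->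
      nat_of_ord i1 = 0%N ->
      g [ffun _ => z] = h [ffun _ => z] -> tau i1 = pi i1) ->
  [/\ (forall g x, g \in G -> x \in M -> g x = x -> g = 1%g),
      #|G| = #|M| &
      topolinear M].
Proof.
move=> n2 HM zM GI Gtr Hyp.
set zero := [ffun _ => z] in zM Hyp *.
have n0 : (0 < n)%N by apply: leq_trans n2.
pose i1 : 'I_n := Ordinal n0.
have stab0 : forall k, k \in G -> k zero = zero -> k = 1%g.
  move=> k kG kz.
  have := subsetP GI k kG; rewrite inE => /andP[/existsP[tau /forallP Htau] /eqP kM].
  have iso : is_iso_by tau k by move=> x; apply/eqP.
  have iso1 : is_iso_by [ffun _ => 1%g] (1%g : {perm {ffun 'I_n -> Q}}).
    by move=> x; apply/ffunP => j; rewrite perm1 !ffunE perm1.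
  have t1 : tau i1 = 1%g.
    have := Hyp k 1%g tau [ffun _ => 1%g] i1 kG (group1 G) iso iso1 erefl.
    by rewrite perm1 ffunE; apply.
  have tz : forall i, tau i z = z.
    by move=> i; have := congr1 (fun f : {ffun 'I_n -> Q} => f i) kz; rewrite iso /iso_fun !ffunE.
  have kMM : forall y, y \in M -> k y \in M.
    by move=> y yM; rewrite -kM; apply: imset_f.
  have tall : forall i, tau i = 1%g.
    move=> i; case: (eqVneq i i1) => [->//|ii1].
    apply/permP => b; rewrite perm1.
    pose w : {ffun 'I_n -> Q} := [ffun j => if j == i then b else z].
    have wz : w i1 = z by rewrite ffunE eq_sym (negbTE ii1).
    have [y yM Hy] := @surjM _ _ _ _ _ _ n0 HM wz.
    have E : k y = y.
      apply: (@ham_eq _ _ _ _ _ i HM (kMM _ yM) yM) => j ji.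
      rewrite iso ffunE; case: (eqVneq j i1) => [->|ji1]; first by rewrite t1 perm1.
      by rewrite Hy // ffunE (negbTE ji) tz.
    have := congr1 (fun f : {ffun 'I_n -> Q} => f i) E; rewrite iso ffunE Hy // ffunE eqxx.
    by [].
  apply/permP => x; rewrite perm1 iso; apply/ffunP => j.
  by rewrite ffunE tall perm1.
have stab : forall g x, g \in G -> x \in M -> g x = x -> g = 1%g.
  move=> g x gG xM gx.
  have : x \in orbit 'P G zero by rewrite (atransP Gtr _ zM).
  case/orbitP => h hG; rewrite /= apermE => hx.
  have hk : (h * g * h^-1)%g zero = zero.
    by rewrite !permM hx gx -hx -permM mulgV perm1.
  have := stab0 _ (groupM (groupM hG gG) (groupVr hG)) hk.
  move/(congr1 (fun u => h^-1 * u * h)%g).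
  by rewrite mulg1 mulVg !mulgA mulVg mul1g mulgKV.
have cardG : #|G| = #|M|.
  rewrite -(card_orbit_stab 'P G zero) (atransP Gtr _ zM).
  suff -> : 'C_G[zero | 'P]%g = 1%g by rewrite cards1 muln1.
  apply/eqP; rewrite eqEsubset sub1G andbT; apply/subsetP => k.
  rewrite inE => /andP[kG /astab1P kz].
  by rewrite (stab0 k kG kz) inE.
split => //; by exists G.
Qed.
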